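(* Let $\alpha\ge0$ and $n\ge2$ with $n\ge\alpha$, and let $K$ be the event that $\mathscr{G}(n,\alpha/n)$ is connected. Then \[ P_{n,\alpha}(K)\ge\frac1n\Bigl(1-\bigl(1-\tfrac{\alpha}{n}\bigr)^{n-1}\Bigr)^{n-1}. \]
   Context: $\mathscr{G}(n,p)$ is the random graph on vertex set $\{1,\dots,n\}$ in which each of the $\binom n2$ unordered pairs is an edge independently with probability $p$; here $p=\alpha/n$, and $P_{n,\alpha}$ is the corresponding probability measure. *)

(* Defs.v *)
From mathcomp Require Import all_boot all_order all_algebra.
Set Implicit Arguments. Unset Strict Implicit. Unset Printing Implicit Defensive.
Import Order.TTheory GRing.Theory Num.Theory.
Local Open Scope ring_scope.

(* Unordered pairs {i,j} of vertices of [n] = 'I_n, encoded as (i,j) with i < j. *)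
Definition upairs (n : nat) : {set 'I_n * 'I_n} :=
  [set e : 'I_n * 'I_n | (e.1 < e.2)%N].

(* A simple graph on 'I_n is a subset E of upairs n; adjacency relation. *)
Definition gadj (n : nat) (E : {set 'I_n * 'I_n}) : rel 'I_n :=
  fun x y => ((x, y) \in E) || ((y, x) \in E).

Definition gconnected (n : nat) (E : {set 'I_n * 'I_n}) : bool :=
  [forall x : 'I_n, forall y : 'I_n, connect (gadj E) x y].

Definition gnp_weight (R : comRingType) (n : nat) (p : R) (E : {set 'I_n * 'I_n}) : R :=
  p ^+ #|E| * (1 - p) ^+ (#|upairs n| - #|E|).

Definition gnp_prob (R : comRingType) (n : nat) (p : R) (A : pred {set 'I_n * 'I_n}) : R :=
  \sum_(E in powerset (upairs n) | A E) gnp_weight p E.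

(* Main.v *)
Require Import Defs.
From mathcomp Require Import all_boot all_order all_algebra.
From mathcomp Require Import ring lra zify.
Set Implicit Arguments. Unset Strict Implicit. Unset Printing Implicit Defensive.
Import Order.TTheory GRing.Theory Num.Theory.
Local Open Scope ring_scope.

Section Prod.
Variable (R : realFieldType) (T : finType).

Lemma big_powersetU (U1 U2 : {set T}) (G : {set T} -> R) :
  [disjoint U1 & U2] ->
  \sum_(E in powerset (U1 :|: U2)) G E =
  \sum_(E1 in powerset U1) \sum_(E2 in powerset U2) G (E1 :|: E2).
Proof.
move=> dis.
rewrite (partition_big (fun E => E :&: U1) (fun E1 => E1 \in powerset U1)); last first.
  by move=> E _; rewrite powersetE subsetIr.
apply: eq_bigr => E1; rewrite powersetE => sE1.
rewrite (reindex_onto (fun E2 => E1 :|: E2) (fun E => E :&: U2)) /=; last first.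
  move=> E /andP[]; rewrite powersetE => sE /eqP <-.
  by rewrite -setIUr; apply/setIidPl.
apply: eq_bigl => E2; rewrite !powersetE.
have dx : forall x, x \in U1 -> x \in U2 -> False.
  by move=> x h1 h2; move: dis; rewrite disjoints_subset => /subsetP /(_ x h1); rewrite inE h2.
apply/idP/idP.
  by move=> /andP[] _ /eqP <-; apply: subsetIr.
move=> sE2; apply/andP; split; first (apply/andP; split).
- by apply: setUSS.
- apply/eqP/setP => x; rewrite !inE; case h1: (x \in E1); first by rewrite (subsetP sE1).
  by case h2: (x \in E2) => //=; case h3: (x \in U1) => //; exfalso; apply: (dx x h3); apply: (subsetP sE2).
- apply/eqP/setP => x; rewrite !inE; case h2: (x \in E2); first by rewrite orbT (subsetP sE2).
  rewrite orbF; case h1: (x \in E1) => //=; case h3: (x \in U2) => //=; exfalso; apply: (dx x); [exact: (subsetP sE1 x h1) | by rewrite h3].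
Qed.

Variable p : R.
Hypothesis p0 : 0 <= p.
Hypothesis p1 : p <= 1.

Definition wt (U E : {set T}) : R := p ^+ #|E| * (1 - p) ^+ (#|U| - #|E|).
Definition ex (U : {set T}) (F : {set T} -> R) : R :=
  \sum_(E in powerset U) wt U E * F E.

Lemma wt_ge0 U E : 0 <= wt U E.
Proof. by rewrite /wt mulr_ge0 // exprn_ge0 // subr_ge0. Qed.

Lemma card_disjU (A B : {set T}) : [disjoint A & B] -> #|A :|: B| = (#|A| + #|B|)%N.
Proof. by move=> d; rewrite -cardsUI (disjoint_setI0 d) cards0 addn0. Qed.

Lemma ex_split (U1 U2 : {set T}) F : [disjoint U1 & U2] ->
  ex (U1 :|: U2) F = ex U1 (fun E1 => ex U2 (fun E2 => F (E1 :|: E2))).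
Proof.
move=> dis; rewrite /ex big_powersetU //; apply: eq_bigr => E1; rewrite powersetE => s1.
rewrite big_distrr; apply: eq_bigr => E2; rewrite powersetE => s2.
have d12 : [disjoint E1 & E2].
  by apply: (disjointWl s1); apply: (disjointWr s2).
rewrite /= mulrA; congr (_ * _).
rewrite /wt !card_disjU // -(subnKC (subset_leq_card s1)) -(subnKC (subset_leq_card s2)).
set a := #|E1|; set b := #|E2|; set c := (#|U1| - a)%N; set d := (#|U2| - b)%N.
have -> : ((a + c + (b + d)) - (a + b) = c + d)%N by lia.
by rewrite !exprD !addKn; ring.
Qed.

Lemma ex_ge0 (U : {set T}) (F : {set T} -> R) : (forall E : {set T}, E \subset U -> 0 <= F E) -> 0 <= ex U F.
Proof.
move=> h; apply: sumr_ge0 => E; rewrite powersetE => s; by rewrite mulr_ge0 ?wt_ge0 ?h.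
Qed.

Lemma ex_le (U : {set T}) (F G : {set T} -> R) : (forall E : {set T}, E \subset U -> F E <= G E) -> ex U F <= ex U G.
Proof.
move=> h; apply: ler_sum => E; rewrite powersetE => s; by rewrite ler_wpM2l ?wt_ge0 ?h.
Qed.

Lemma ex_eq (U : {set T}) (F G : {set T} -> R) : (forall E : {set T}, E \subset U -> F E = G E) -> ex U F = ex U G.
Proof.
move=> h; apply: eq_bigr => E; rewrite powersetE => s; by rewrite h.
Qed.

Lemma ex1 (u : T) (F : {set T} -> R) : ex [set u] F = p * F [set u] + (1 - p) * F set0.
Proof.
rewrite /ex powerset1 big_setU1 ?big_set1 /=; last first.
  by rewrite inE; apply/eqP => /setP /(_ u); rewrite !inE eqxx.
by rewrite /wt cards1 cards0 subnn subn0 /= addrC !expr1 !expr0 mulr1 mul1r.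
Qed.

Lemma ex_cst (U : {set T}) (c : R) : ex U (fun _ => c) = c.
Proof.
have [m] := ubnP #|U|; elim: m U => // m IH U.
case: (set_0Vmem U) => [->|[u uU]] hU.
  by rewrite /ex powerset0 big_set1 /wt cards0 subnn !expr0 !mul1r.
rewrite -(setD1K uU) ex_split; last by rewrite disjoints1 !inE eqxx.
rewrite (@ex_eq _ _ (fun _ => c)); first by rewrite ex1; ring.
by move=> E _; apply: IH; rewrite (cardsD1 u U) uU in hU.
Qed.

Lemma ex_set0 (U : {set T}) (y z : R) :
  ex U (fun E => if E == set0 then y else z) = (1 - p) ^+ #|U| * y + (1 - (1 - p) ^+ #|U|) * z.
Proof.
have h := ex_cst U z.
rewrite /ex in h *.
have s0 : set0 \in powerset U by rewrite powersetE sub0set.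
rewrite (bigD1 set0 s0) in h.
rewrite (bigD1 set0 s0) eqxx.
have -> : wt U set0 = (1 - p) ^+ #|U| by rewrite /wt cards0 expr0 mul1r subn0.
rewrite (_ : wt U set0 = (1 - p) ^+ #|U|) in h; last by rewrite /wt cards0 expr0 mul1r subn0.
set w := (1 - p) ^+ #|U|.
rewrite (@eq_bigr _ _ _ _ _ _ (fun E => wt U E * (if E == set0 then y else z)) (fun E => wt U E * z)); last first.
  by move=> E /andP[_ /negbTE ->].
set S := \sum_(i in powerset U | i != set0) _.
rewrite -/S in h.
have -> : S = z - w * z by rewrite -{1}h addrAC subrr add0r.
by rewrite mulrBl mul1r.
Qed.
Lemma ex_set0k (U : {set T}) (y z : R) (k : nat) : #|U| = k ->
  ex U (fun E => if E == set0 then y else z) = (1 - p) ^+ k * y + (1 - (1 - p) ^+ k) * z.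
Proof. by move=> <-; apply: ex_set0. Qed.
End Prod.

Section Alg.
Variable (R : realFieldType) (x : R).
Hypothesis x0 : 0 <= x.
Hypothesis x1 : x <= 1.

Lemma aux1 (j N : nat) : (j <= N)%N -> j%:R * x ^+ N * (1 - x) <= 1 - x ^+ j.
Proof.
elim: j => [|j IH] hj; first by rewrite mul0r mul0r expr0 subrr.
have hj' : (j <= N)%N by lia.
have := IH hj'.
have hxN : x ^+ N <= x ^+ j by apply: ler_wiXn2l.
have h1x : 0 <= 1 - x by rewrite subr_ge0.
rewrite exprS -natr1.
move=> h; have : x ^+ N * (1 - x) <= x ^+ j * (1 - x) by apply: ler_wpM2r.
move=> h2; nra.
Qed.

Lemma aux2 (j d : nat) : j%:R * (1 - x ^+ (j + d)) <= (j + d)%:R * (1 - x ^+ j).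
Proof.
elim: d => [|d IH]; first by rewrite addn0.
have h := @aux1 j (j + d) (leq_addr _ _).
rewrite addnS exprS -addn1 natrD.
have hxj : x ^+ (j + d) * (1 - x) >= 0 by rewrite mulr_ge0 ?exprn_ge0 // subr_ge0.
have : 0 <= 1 - x ^+ j by rewrite subr_ge0 exprn_ile1.
nra.
Qed.

Fixpoint Lf (a b : R) (G : nat -> R) (rho alpha : nat) : R :=
  if rho is r.+1 then a * Lf a b G r alpha.+1 + b * Lf a b G r alpha else G alpha.

Lemma Lf_closed (a b c : R) (m : nat) (G : nat -> R) :
  m != 0%N -> (forall j, (j <= m)%N -> G j = j%:R / m%:R * c ^+ (m - j)) ->
  forall rho alpha, (alpha + rho <= m)%N ->
  Lf a b G rho alpha * m%:R =
    c ^+ (m - alpha - rho) * (alpha%:R * (a + b * c) ^+ rho + rho%:R * a * (a + b * c) ^+ rho.-1).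
Proof.
move=> m0 hG; elim=> [|r IH] al hal /=.
  rewrite hG ?subn0 ?mulr0 ?addr0; last by lia.
  have : m%:R != 0 :> R by rewrite pnatr_eq0.
  move=> hm; rewrite expr0 mulr1 !mul0r addr0; field; exact: hm.
rewrite mulrDl -!mulrA IH; last by lia.
rewrite IH; last by lia.
have -> : (m - al - r = (m - al.+1 - r).+1)%N by lia.
have -> : (m - al - r.+1 = m - al.+1 - r)%N by lia.
set N := (m - al.+1 - r)%N; set d := a + b * c.
have hd : r%:R * d ^+ r = r%:R * (d * d ^+ r.-1) :> R.
  by case: r {IH hal N} => [|r]; rewrite ?mul0r //= exprS.
apply: (@subr0_eq _ _ _); rewrite -!natr1 exprS.
transitivity (- (c ^+ N * a * (r%:R * d ^+ r - r%:R * (d * d ^+ r.-1)))).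
  rewrite /d !exprS; ring.
by rewrite hd subrr mulr0 oppr0.
Qed.
End Alg.

Section Graph.
Variable n : nat.
Implicit Types (I S A X Y : {set 'I_n}) (E : {set 'I_n * 'I_n}).

Definition pairs (X Y : {set 'I_n}) : {set 'I_n * 'I_n} :=
  [set e in upairs n | ((e.1 \in X) && (e.2 \in Y)) || ((e.1 \in Y) && (e.2 \in X))].

Definition J I X E : {set 'I_n} := [set r in X | [exists i in I, gadj E r i]].

Definition Good I S E : bool := [forall s in S, [exists i in I, connect (gadj E) s i]].

Lemma dis_mem (X Y : {set 'I_n}) : [disjoint X & Y] -> forall v, (v \in X) && (v \in Y) = false.
Proof. by move=> d v; case h: (v \in X) => //=; rewrite (disjointFr d h). Qed.

Lemma pairsU I X Y : pairs I (X :|: Y) = pairs I X :|: pairs I Y.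
Proof.
apply/setP => e; rewrite !inE.
by case: (e.1 < e.2)%N; case: (e.1 \in I); case: (e.2 \in I); case: (e.1 \in X);
  case: (e.2 \in X); case: (e.1 \in Y); case: (e.2 \in Y).
Qed.

Lemma pairs_dis I X Y : [disjoint I & X] -> [disjoint I & Y] -> [disjoint X & Y] ->
  [disjoint pairs I X & pairs I Y].
Proof.
move=> /dis_mem d1 /dis_mem d2 /dis_mem d3; rewrite disjoints_subset; apply/subsetP => e.
rewrite !inE; move: (d1 e.1) (d1 e.2) (d2 e.1) (d2 e.2) (d3 e.1) (d3 e.2).
by case: (e.1 < e.2)%N; case: (e.1 \in I); case: (e.2 \in I); case: (e.1 \in X);
  case: (e.2 \in X); case: (e.1 \in Y); case: (e.2 \in Y).
Qed.

Lemma pairs0 I : pairs I set0 = set0.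
Proof. by apply/setP => e; rewrite !inE !andbF. Qed.

Lemma card_pairs1 I t : t \notin I -> #|pairs I [set t]| = #|I|.
Proof.
move=> tI.
pose f := fun i : 'I_n => if (i < t)%N then (i, t) else (t, i).
have -> : pairs I [set t] = f @: I.
  apply/setP => [[u v]]; rewrite !inE /=; apply/idP/imsetP.
    case/andP => uv /orP[]/andP[h1 h2].
      exists u => //; rewrite /f; move/eqP: h2 => ?; subst v; by rewrite uv.
    exists v => //; rewrite /f; move/eqP: h1 => ?; subst u; rewrite ifF //; apply/negbTE; rewrite -leqNgt.
    by apply: ltnW.
  case=> i iI; rewrite /f; case: ifP => it [-> ->]; rewrite iI eqxx /=.
    by rewrite it.
  have : i != t by apply: contraNneq tI => <-.
  rewrite -val_eqE /= => /eqP hne; apply/andP; split => //; lia.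
apply: card_in_imset => i j iI jI; rewrite /f.
case: ifP => hi; case: ifP => hj [] => //.
all: try by move=> ->.
all: move=> *; subst; try lia.
Qed.

Lemma J0 I E : J I set0 E = set0.
Proof. by apply/setP => r; rewrite !inE. Qed.

Lemma gadjU E1 E2 u v : gadj (E1 :|: E2) u v = gadj E1 u v || gadj E2 u v.
Proof. rewrite /gadj /= !inE; by case: ((u, v) \in E1); case: ((v, u) \in E1); case: ((u, v) \in E2); case: ((v, u) \in E2). Qed.

Lemma J_split I (R' : {set 'I_n}) t E1 E2 : t \notin I -> t \notin R' -> [disjoint I & R'] ->
  E1 \subset pairs I [set t] -> E2 \subset pairs I R' ->
  J I (t |: R') (E1 :|: E2) = (if E1 == set0 then set0 else [set t]) :|: J I R' E2.
Proof.
move=> tI tR dIR s1 s2.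
have h1 : forall e, e \in E1 -> ((e.1 \in I) && (e.2 == t)) || ((e.1 == t) && (e.2 \in I)).
  by move=> e /(subsetP s1); rewrite !inE => /andP[_].
have h2 : forall e, e \in E2 -> ((e.1 \in I) && (e.2 \in R')) || ((e.1 \in R') && (e.2 \in I)).
  by move=> e /(subsetP s2); rewrite !inE => /andP[_].
apply/setP => r; rewrite !inE.
case: (r =P t) => [->|rt] /=.
  rewrite (negbTE tR) andFb orbF.
  have -> : (t \in (if E1 == set0 then set0 else [set t])) = (E1 != set0).
    by case: eqP => _; rewrite inE ?eqxx.
  apply/idP/idP.
    case/existsP => i /andP[iI]; rewrite gadjU => /orP[].
      rewrite /gadj => /orP[] h; case: eqP => // E0; by move: h; rewrite E0 inE.
    rewrite /gadj => /orP[] /h2 /=; by rewrite (negbTE tI) (negbTE tR) ?andbF.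
  case: eqP => // E0 _; case: (set_0Vmem E1) => // [[e eE]].
  move: (h1 e eE); case: e eE => u v eE /= /orP[]/andP[].
    move=> uI /eqP vt; subst v.
    by apply/existsP; exists u; rewrite uI gadjU /gadj /= eE ?orbT.
  move=> /eqP ut vI; subst u.
  by apply/existsP; exists v; rewrite vI gadjU /gadj /= eE.
have -> : (r \in (if E1 == set0 then set0 else [set t])) = false.
  by case: (E1 == set0); rewrite inE //; apply/eqP.
rewrite /=; case rR: (r \in R') => //=.
have rI : r \notin I by rewrite (disjointFl dIR rR).
apply/idP/idP; case/existsP => i /andP[iI]; last first.
  by move=> h; apply/existsP; exists i; rewrite iI gadjU h orbT.
rewrite gadjU => /orP[] h; last by apply/existsP; exists i; rewrite iI h.
exfalso; move: h; rewrite /gadj /= => /orP[] hh; move: (h1 _ hh) => /=.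
  by rewrite (negbTE rI) /= => /andP[/eqP].
by rewrite (negbTE rI) andbF orbF => /andP[_ /eqP].
Qed.
End Graph.

Section Main.
Variable (R : realFieldType) (p : R) (n : nat).
Hypothesis p0 : 0 <= p.
Hypothesis p1 : p <= 1.
Implicit Types (I S A X Y : {set 'I_n}) (E : {set 'I_n * 'I_n}).

Lemma inner (I A R0 : {set 'I_n}) (G : nat -> R) :
  [disjoint A & R0] -> [disjoint I & R0] ->
  ex p (pairs I R0) (fun E => G #|A :|: J I R0 E|) =
  Lf (1 - (1 - p) ^+ #|I|) ((1 - p) ^+ #|I|) G #|R0| #|A|.
Proof.
have [m] := ubnP #|R0|; elim: m A R0 => // m IH A R0 hR dAR dIR.
case: (set_0Vmem R0) => [->|[t tR]].
  rewrite pairs0 cards0 /= (@ex_eq _ _ _ _ _ (fun _ => G #|A|)) ?ex_cst //.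
  by move=> E _; rewrite J0 setU0.
set R' := R0 :\ t.
have eR : R0 = t |: R' by rewrite setD1K.
have tA : t \notin A by rewrite (disjointFl dAR tR).
have tI : t \notin I by rewrite (disjointFl dIR tR).
have tR' : t \notin R' by rewrite !inE eqxx.
have sR' : R' \subset R0 by apply: subD1set.
have dAR' : [disjoint A & R'] by apply: (disjointWr sR').
have dIR' : [disjoint I & R'] by apply: (disjointWr sR').
have cR : #|R0| = #|R'|.+1 by rewrite (cardsD1 t R0) tR.
rewrite cR /= eR pairsU ex_split //; last first.
  apply: pairs_dis => //; by rewrite ?disjoints1 // disjoint_sym disjoints1.
rewrite (@ex_eq _ _ _ _ _ (fun E1 => if E1 == set0 then Lf (1 - (1 - p) ^+ #|I|) ((1 - p) ^+ #|I|) G #|R'| #|A|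
    else Lf (1 - (1 - p) ^+ #|I|) ((1 - p) ^+ #|I|) G #|R'| #|A|.+1)).
  by rewrite (ex_set0k p0 p1 _ _ (card_pairs1 tI)); ring.
move=> E1 s1.
rewrite (@ex_eq _ _ _ _ _ (fun E2 => G #|(A :|: (if E1 == set0 then set0 else [set t])) :|: J I R' E2|)); last first.
  by move=> E2 s2; rewrite J_split // setUA.
rewrite IH //; last first.
- rewrite disjoints_subset subUset -!disjoints_subset dAR' /=.
  case: (E1 == set0); first by rewrite disjoints_subset sub0set.
  by rewrite disjoints1.
- by rewrite cR in hR.
case: (E1 == set0); first by rewrite setU0.
by rewrite setUC cardsU1 tA.
Qed.

Definition B (k m : nat) : R := k%:R / (k + m)%:R * (1 - (1 - p) ^+ (k + m).-1) ^+ m.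

Lemma good_step I S E1 E2 :
  Good (J I S E1) (S :\: J I S E1) E2 -> Good I S (E1 :|: E2).
Proof.
move=> hG; apply/forallP => s; apply/implyP => sS.
case sJ: (s \in J I S E1).
  move: sJ; rewrite inE sS /= => /existsP[i /andP[iI hi]].
  by apply/existsP; exists i; rewrite iI /=; apply: connect1; rewrite gadjU hi.
have : s \in S :\: J I S E1 by rewrite inE sJ sS.
move/(implyP (forallP hG s)) => /existsP[j /andP[jJ hj]].
move: jJ; rewrite inE => /andP[jS /existsP[i /andP[iI hji]]].
apply/existsP; exists i; rewrite iI /=; apply: (@connect_trans _ _ j).
  by apply: (connect_sub _ hj) => u v h; apply: connect1; rewrite gadjU h orbT.
by apply: connect1; rewrite gadjU hji.
Qed.

Lemma le_b (b1 b2 : bool) : (b1 -> b2) -> b1%:R <= b2%:R :> R.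
Proof. by case: b1; case: b2 => // /(_ isT). Qed.

Lemma B0m m : B 0 m = 0.
Proof. by rewrite /B mul0r mul0r. Qed.

Lemma final_alg (k m : nat) : (0 < k)%N -> (0 < m)%N ->
  B k m <= Lf (1 - (1 - p) ^+ k) ((1 - p) ^+ k) (fun j => B j (m - j)) m 0.
Proof.
move=> k0 m0.
set x := 1 - p.
have x0 : 0 <= x by rewrite subr_ge0.
have x1 : x <= 1 by rewrite /x lerBlDr lerDl.
set c := 1 - x ^+ m.-1.
have hG : forall j, (j <= m)%N -> B j (m - j) = j%:R / m%:R * c ^+ (m - j).
  by move=> j hj; rewrite /B subnKC.
have hm : m%:R != 0 :> R by rewrite pnatr_eq0 -lt0n.
have := @Lf_closed _ _ x0 x1 (1 - x ^+ k) (x ^+ k) c m _ (lt0n_neq0 m0) hG m 0 (leqnn _).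
rewrite subn0 subnn expr0 mul1r mul0r add0r => hL.
have -> : Lf (1 - x ^+ k) (x ^+ k) (fun j => B j (m - j)) m 0 =
   (1 - x ^+ k) * (1 - x ^+ k + x ^+ k * c) ^+ m.-1.
  by apply: (mulIf hm); rewrite hL; ring.
have hd : 1 - x ^+ k + x ^+ k * c = 1 - x ^+ (k + m).-1.
  rewrite /c mulrBr mulr1 -exprD; have -> : (k + m.-1 = (k + m).-1)%N by lia. ring.
rewrite hd /B; set d := 1 - x ^+ (k + m).-1.
have d0 : 0 <= d by rewrite subr_ge0 exprn_ile1.
have dm : d ^+ m = d * d ^+ m.-1 by rewrite -exprS prednK.
rewrite dm mulrA; apply: ler_wpM2r; first by rewrite exprn_ge0.
have h2 := @aux2 _ x x0 x1 k m.-1.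
rewrite (_ : (k + m.-1 = (k + m).-1)%N) in h2; last by lia.
have hkm : 0 < (k + m)%:R :> R by rewrite ltr0n; lia.
rewrite mulrC mulrA ler_pdivrMr // mulrC.
apply: (le_trans h2); rewrite mulrC; apply: ler_wpM2l.
  by rewrite subr_ge0 exprn_ile1.
by rewrite ler_nat; lia.
Qed.

Lemma main_ind m : forall I S (U : {set 'I_n * 'I_n}), (#|S| < m)%N -> [disjoint I & S] ->
  pairs S (I :|: S) \subset U -> B #|I| #|S| <= ex p U (fun E => (Good I S E)%:R).
Proof.
elim: m => // m IH I S U hS dIS sU.
have exge0 : forall (U' : {set 'I_n * 'I_n}) (F : {set 'I_n * 'I_n} -> bool), 0 <= ex p U' (fun E => (F E)%:R).
  by move=> U' F; apply: ex_ge0 => // E _; rewrite ler0n.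
case: (posnP #|I|) => [k0|k0]; first by rewrite k0 B0m.
case: (posnP #|S|) => [s0|s0].
  have S0 : S = set0 by apply/eqP; rewrite -cards_eq0 s0.
  rewrite s0 (@ex_eq _ _ _ _ _ (fun _ => 1)); last first.
    by move=> E _; rewrite S0 /Good; have -> : [forall s in set0, [exists i in I, connect (gadj E) s i]] by apply/forall_inP => s; rewrite inE.
  rewrite ex_cst // /B expr0 mulr1 (_ : (#|I| + 0)%:R = #|I|%:R :> R); last by first [rewrite addn0 | rewrite addr0 | done].
  by rewrite divff // pnatr_eq0 -lt0n.
set P := pairs I S.
have sPU : P \subset U.
  apply: subset_trans sU; apply/subsetP => e; rewrite /P /pairs !inE.
  by case: (e.1 < e.2)%N; case: (e.1 \in I); case: (e.2 \in I); case: (e.1 \in S); case: (e.2 \in S).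
have eU : U = P :|: (U :\: P).
  apply/setP => e; rewrite in_setU in_setD; case eP: (e \in P) => //=.
  by rewrite (subsetP sPU _ eP).
rewrite (_ : ex p U _ = ex p (P :|: (U :\: P)) (fun E => (Good I S E)%:R)); last by congr (ex p _ _); exact: eU.
rewrite ex_split //; last first.
  by rewrite disjoints_subset; apply/subsetP => e eP; rewrite in_setC in_setD eP.
apply: le_trans; first exact: (final_alg k0 s0).
have := @inner I set0 S (fun j => B j (#|S| - j)) _ dIS.
rewrite cards0 => <-; last by rewrite disjoints_subset sub0set.
apply: (ex_le p0 p1) => E1 sE1; rewrite set0U.
set Js := J I S E1.
have sJ : Js \subset S by apply/subsetP => r; rewrite inE => /andP[].
apply: (@le_trans _ _ (ex p (U :\: P) (fun E2 => (Good Js (S :\: Js) E2)%:R))); last first.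
  apply: (ex_le p0 p1) => E2 _; apply: le_b; apply: good_step.
have cD : #|S :\: Js| = (#|S| - #|Js|)%N by rewrite cardsD (setIidPr sJ).
have cJ : (#|Js| <= #|S|)%N by apply: subset_leq_card.
rewrite -cD; case: (posnP #|Js|) => [j0|j0]; first by rewrite j0 B0m.
clearbody Js; apply: IH.
- rewrite cD; lia.
- by rewrite disjoints_subset; apply/subsetP => r rJ; rewrite in_setC in_setD rJ.
- apply/subsetP => e; rewrite in_setD.
  have i1 : (e.1 \in Js) ==> (e.1 \in S) by apply/implyP/(subsetP sJ).
  have i2 : (e.2 \in Js) ==> (e.2 \in S) by apply/implyP/(subsetP sJ).
  have d1 := dis_mem dIS e.1; have d2 := dis_mem dIS e.2.
  move=> he; apply/andP; split; last first.
    apply: (subsetP sU); move: he; rewrite /pairs !inE.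
    move: i1 i2 d1 d2.
    by case: (e.1 < e.2)%N; case: (e.1 \in I); case: (e.2 \in I); case: (e.1 \in S); case: (e.2 \in S);
      case: (e.1 \in Js); case: (e.2 \in Js).
  move: he; rewrite /P /pairs !inE.
  move: i1 i2 d1 d2.
  by case: (e.1 < e.2)%N; case: (e.1 \in I); case: (e.2 \in I); case: (e.1 \in S); case: (e.2 \in S);
    case: (e.1 \in Js); case: (e.2 \in Js).
Qed.

Lemma final_main (v0 : 'I_n) :
  n%:R^-1 * (1 - (1 - p) ^+ n.-1) ^+ n.-1 <= gnp_prob p (@gconnected n).
Proof.
have -> : gnp_prob p (@gconnected n) = ex p (upairs n) (fun E => (gconnected E)%:R).
  rewrite /gnp_prob /ex big_mkcondr; apply: eq_bigr => E _.
  by rewrite /gnp_weight /wt; case: (gconnected E); rewrite ?mulr1 ?mulr0.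
have hB : B #|[set v0]| #|~: [set v0]| = n%:R^-1 * (1 - (1 - p) ^+ n.-1) ^+ n.-1.
  rewrite cards1 cardsC1 card_ord /B add1n prednK; last by case: (n) v0 => [[]|].
  by rewrite mul1r.
have hm : B #|[set v0]| #|~: [set v0]| <= ex p (upairs n) (fun E => (Good [set v0] (~: [set v0]) E)%:R).
  apply: main_ind (ltnSn _) _ _.
  - by rewrite disjoints_subset; apply/subsetP => v; rewrite !inE => ->.
  - by apply/subsetP => e; rewrite inE => /andP[].
rewrite -hB; apply: (le_trans hm).
apply: (ex_le p0 p1) => E _; apply: le_b => hG.
have hc : forall x, connect (gadj E) x v0.
  move=> x; case: (x =P v0) => [->|xv]; first exact: connect0.
  have : x \in ~: [set v0] by rewrite !inE; apply/eqP.
  move/(implyP (forallP hG x)) => /existsP[i /andP[]]; rewrite inE => /eqP -> //.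
apply/forallP => x; apply/forallP => y.
have sym : connect_sym (gadj E).
  by apply: sym_connect_sym => u v; rewrite /gadj orbC.
by apply: (connect_trans (hc x)); rewrite sym hc.
Qed.
End Main.

Theorem lemma3p4 (R : realFieldType) (alpha : R) (n : nat) :
  0 <= alpha -> (2 <= n)%N -> alpha <= n%:R ->
  n%:R^-1 * (1 - (1 - alpha / n%:R) ^+ n.-1) ^+ n.-1
    <= gnp_prob (alpha / n%:R) (@gconnected n).
Proof.
move=> a0 n2 an.
have n0 : (0 < n)%N by lia.
have hn : 0 < n%:R :> R by rewrite ltr0n.
apply: final_main.
- by rewrite divr_ge0 // ler0n.
- by rewrite ler_pdivrMr // mul1r.
- exact: (Ordinal n0).
Qed.
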